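(* Let $C_{SR}>C_{SD}=b=\log(1+m)>0$ (with $m>0$) and $c>0$. Let $J$ be either $J_{IA}(\alpha_2,\alpha_3)=b+\log(1+c\alpha_2/\alpha_3)$ or $J_{EA}(\alpha_2,\alpha_3)=\log(1+m+c\alpha_2/\alpha_3)$, with $\alpha_3J:=0$ when $\alpha_3=0$. On the simplex $\Delta=\{(\alpha_1,\alpha_2,\alpha_3)\in[0,1]^3:\alpha_1+\alpha_2+\alpha_3=1\}$ define $$R^{(TS)}(\alpha_1,\alpha_2,\alpha_3)=\min\{\alpha_1C_{SR},\ (\alpha_1+\alpha_2)C_{SD}+\alpha_3J(\alpha_2,\alpha_3)\}.$$ Then every maximizer $(\alpha_1^*,\alpha_2^*,\alpha_3^* )$ of $R^{(TS)}$ over $\Delta$ satisfies $$\alpha_1^*C_{SR}=(\alpha_1^*+\alpha_2^* )C_{SD}+\alpha_3^*J(\alpha_2^*,\alpha_3^* ).$$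
   Context: $\log$ is the natural logarithm. This concerns the time-switching relay protocol: $\alpha_1,\alpha_2,\alpha_3$ are the time fractions of the relay's listening sub-phase, energy-harvesting sub-phase and collaboration phase; in the paper's setting $C_{SR}=\log(1+P_SH_{SR}/\sigma_R^2)$, $C_{SD}=\log(1+P_SH_{SD}/\sigma_D^2)$, $m=P_SH_{SD}/\sigma_D^2$, $c=\eta H_{SR}H_{RD}P_S/\sigma_D^2$. IA = mutual-information accumulation, EA = energy accumulation at the destination. *)

(* Defs.v *)
From Stdlib Require Import Reals Lra.
Open Scope R_scope.

Inductive scheme : Type := IA | EA.

Definition J (s : scheme) (m c a2 a3 : R) : R :=
  match s with
  | IA => ln (1 + m) + ln (1 + c * a2 / a3)
  | EA => ln (1 + m + c * a2 / a3)
  end.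

Definition a3J (s : scheme) (m c a2 a3 : R) : R :=
  if Req_EM_T a3 0 then 0 else a3 * J s m c a2 a3.

Definition in_simplex (a1 a2 a3 : R) : Prop :=
  0 <= a1 <= 1 /\ 0 <= a2 <= 1 /\ 0 <= a3 <= 1 /\ a1 + a2 + a3 = 1.

(* C_SD = b = log(1+m). *)
Definition R_TS (s : scheme) (CSR m c a1 a2 a3 : R) : R :=
  Rmin (a1 * CSR) ((a1 + a2) * ln (1 + m) + a3J s m c a2 a3).

(* Main.v *)
Require Import Defs.
From Stdlib Require Import Reals.
From Stdlib Require Import Lra Psatz.
Open Scope R_scope.

Lemma a3J_scale s m c k a2 a3 : 0 < k ->
  a3J s m c (k*a2) (k*a3) = k * a3J s m c a2 a3.
Proof.
  intros hk. unfold a3J.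
  destruct (Req_EM_T (k*a3) 0) as [e|e]; destruct (Req_EM_T a3 0) as [e'|e'].
  - lra.
  - exfalso. apply e'. destruct (Rmult_integral _ _ e); lra.
  - subst. exfalso. apply e. ring.
  - replace (c * (k*a2) / (k*a3)) with (c*a2/a3) by (field; lra).
    destruct s; simpl; replace (c * (k*a2) / (k*a3)) with (c*a2/a3) by (field; lra); ring.
Qed.

Lemma a3J_nonneg s m c a2 a3 : 0 < m -> 0 < c -> 0 <= a2 -> 0 <= a3 ->
  ln (1+m) * a3 <= a3J s m c a2 a3.
Proof.
  intros hm hc h2 h3. unfold a3J.
  destruct (Req_EM_T a3 0) as [e|e]. { subst; lra. }
  assert (0 <= c*a2/a3) by (apply Rmult_le_pos; [nra| apply Rlt_le, Rinv_0_lt_compat; lra]).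
  rewrite (Rmult_comm _ a3). apply Rmult_le_compat_l; [lra|].
  destruct s; simpl.
  - assert (0 <= ln (1 + c*a2/a3)).
    { rewrite <- ln_1. destruct (Req_dec (c*a2/a3) 0) as [z|z].
      + rewrite z, Rplus_0_r. lra.
      + left. apply ln_increasing; lra. }
    lra.
  - destruct (Req_dec (c*a2/a3) 0) as [z|z].
    + rewrite z, Rplus_0_r. lra.
    + left. apply ln_increasing; lra.
Qed.

Lemma J11 s m c : 0 < m -> 0 < c -> ln (1+m) < J s m c 1 1.
Proof.
  intros hm hc. replace (c*1/1) with c by field.
  destruct s; simpl; replace (c*1/1) with c by field.
  - assert (0 < ln (1+c)) by (rewrite <- ln_1; apply ln_increasing; lra). lra.
  - apply ln_increasing; lra.
Qed.

Theorem lemma4 (s : scheme) (CSR m c : R)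
  (hm : 0 < m) (hc : 0 < c) (hCSR : ln (1 + m) < CSR)
  (a1 a2 a3 : R) (hin : in_simplex a1 a2 a3)
  (hmax : forall b1 b2 b3 : R, in_simplex b1 b2 b3 ->
            R_TS s CSR m c b1 b2 b3 <= R_TS s CSR m c a1 a2 a3) :
  a1 * CSR = (a1 + a2) * ln (1 + m) + a3J s m c a2 a3.
Proof.
  set (b := ln (1+m)).
  assert (hCSR2 : b < CSR) by exact hCSR. clear hCSR.
  assert (hb : 0 < b) by (unfold b; rewrite <- ln_1; apply ln_increasing; lra).
  destruct hin as [h1 [h2 [h3 hs]]].
  set (f0 := a1 * CSR). set (g0 := (a1 + a2) * b + a3J s m c a2 a3).
  assert (hg3 := a3J_nonneg s m c a2 a3 hm hc (proj1 h2) (proj1 h3)).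
  try fold b in hg3.
  assert (hA : b < R_TS s CSR m c a1 a2 a3).
  { set (e := (CSR - b) / (4 * CSR)).
    assert (he0 : 0 < e) by (unfold e; apply Rdiv_lt_0_compat; lra).
    assert (he1 : e * (4*CSR) = CSR - b) by (unfold e; field; lra).
    assert (hsimp : in_simplex (1 - 2*e) (e*1) (e*1)) by (unfold in_simplex; nra).
    specialize (hmax _ _ _ hsimp).
    eapply Rlt_le_trans; [|exact hmax].
    unfold R_TS. rewrite a3J_scale by lra.
    assert (hK := J11 s m c hm hc). try fold b in hK.
    assert (a3J s m c 1 1 = J s m c 1 1).
    { unfold a3J. destruct (Req_EM_T 1 0); [lra|ring]. }
    apply Rmin_glb_lt; fold b; nra. }
  unfold R_TS in hA. fold b in hA. fold f0 g0 in hA.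
  assert (hf0 : b < f0) by (eapply Rlt_le_trans; [exact hA| apply Rmin_l]).
  assert (hgb : b < g0) by (eapply Rlt_le_trans; [exact hA| apply Rmin_r]).
  fold f0 g0.
  destruct (Rtotal_order f0 g0) as [lt|[eq|gt]]; [exfalso| exact eq| exfalso].
  -
    assert (ha1 : a1 < 1).
    { destruct (Req_dec a1 1) as [z|z]; [|lra].
      assert (a2 = 0) by lra. assert (a3 = 0) by lra. subst.
      unfold f0, g0, a3J in lt. destruct (Req_EM_T 0 0); lra. }
    set (t := (g0 - f0) / (g0 - f0 + (CSR - b))).
    assert (ht : t * (g0 - f0 + (CSR - b)) = g0 - f0) by (unfold t; field; lra).
    assert (ht0 : 0 < t) by (unfold t; apply Rdiv_lt_0_compat; lra).
    assert (ht1 : t < 1) by nra.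
    assert (hsimp : in_simplex ((1-t)*a1 + t) ((1-t)*a2) ((1-t)*a3))
      by (unfold in_simplex; nra).
    specialize (hmax _ _ _ hsimp). unfold R_TS in hmax.
    rewrite a3J_scale in hmax by lra. fold b f0 g0 in hmax.
    rewrite (Rmin_left f0 g0) in hmax by lra.
    assert (E : ((1 - t) * a1 + t) * CSR = ((1 - t) * a1 + t + (1 - t) * a2) * b +
        (1 - t) * a3J s m c a2 a3).
    { unfold f0, g0 in ht. nra. }
    rewrite <- E, Rmin_left in hmax by lra.
    unfold f0 in hmax. assert (0 < t * (1 - a1)) by nra. assert (0 < t*(1-a1)*CSR) by nra. nra.
  -
    assert (hs23 : 0 < a2 + a3).
    { destruct (Req_dec a3 0) as [z|z]; [|lra].
      subst. unfold g0, a3J in hgb. destruct (Req_EM_T 0 0); [|lra].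
      assert (a1 + a2 = 1) by lra. nra. }
    assert (hG : (a2+a3) * b < a2 * b + a3J s m c a2 a3) by (unfold g0 in hgb; nra).
    set (d := (f0 - g0) / (2 * CSR)).
    assert (hd : d * (2*CSR) = f0 - g0) by (unfold d; field; lra).
    assert (hd0 : 0 < d) by (unfold d; apply Rdiv_lt_0_compat; lra).
    assert (hda : d < a1) by (unfold f0 in hd; nra).
    set (k := 1 + d / (a2 + a3)).
    assert (hk : k * (a2 + a3) = a2 + a3 + d) by (unfold k; field; lra).
    assert (hk1 : 1 < k) by (unfold k; assert (0 < d/(a2+a3)) by (apply Rdiv_lt_0_compat; lra); lra).
    assert (hsimp : in_simplex (a1 - d) (k*a2) (k*a3)) by (unfold in_simplex; nra).
    specialize (hmax _ _ _ hsimp). unfold R_TS in hmax.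
    rewrite a3J_scale in hmax by lra. fold b f0 g0 in hmax.
    rewrite (Rmin_right f0 g0) in hmax by lra.
    assert (Rmin ((a1 - d) * CSR) ((a1 - d + k * a2) * b + k * a3J s m c a2 a3) > g0).
    { apply Rmin_glb_lt.
      - unfold f0 in hd. nra.
      - unfold g0. nra. }
    lra.
Qed.
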